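(* For any VSCC $F$, the following are equivalent: (1) $F$ satisfies Pure IIA; (2) $F$ is defeat-rationalized by some VCCR satisfying IIA.
   Context: Profiles: $\mathbf P:V\to\mathcal L(X)$, $V$ nonempty finite set of voters, $X=X(\mathbf P)$ nonempty finite set of candidates (from fixed infinite sets), $\mathcal L(X)$ strict linear orders; $\mathbf P_{|Y}$ is the profile with each ballot restricted to $Y$. A VCCR is a function $f$ assigning to each profile an asymmetric relation $f(\mathbf P)$ on $X(\mathbf P)$ ($x$ defeats $y$ iff $(x,y)\in f(\mathbf P)$). A VSCC is a function $F$ with $\varnothing\ne F(\mathbf P)\subseteq X(\mathbf P)$ for every profile. $F$ is defeat-rationalized by $f$ if for every profile $\mathbf P$, $F(\mathbf P)=\{x\in X(\mathbf P): \text{no } y\in X(\mathbf P) \text{ with } (y,x)\in f(\mathbf P)\}$. A VCCR $f$ satisfies IIA if whenever $(x,y)\in f(\mathbf P)$ and $\mathbf P_{|\{x,y\}}=\mathbf P'_{|\{x,y\}}$, then $(x,y)\in f(\mathbf P')$. A VSCC $F$ satisfies Pure IIA if for every profile $\mathbf P$ and $y\in X(\mathbf P)$ with $y\notin F(\mathbf P)$ there is $x\in X(\mathbf P)$ such that $y\notin F(\mathbf P')$ for every profile $\mathbf P'$ with $\mathbf P_{|\{x,y\}}=\mathbf P'_{|\{x,y\}}$. *)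

(* Defs.v *)
From mathcomp Require Import all_boot finmap.
Set Implicit Arguments. Unset Strict Implicit. Unset Printing Implicit Defensive.
Local Open Scope fset_scope.

(* A profile: a nonempty finite set V of voters, a nonempty finite set X of
   candidates, and for every voter v in V a strict linear order on X;
   [ballot P v a b] means voter v ranks a strictly above b. *)
Definition strict_linear_on (X : {fset nat}) (r : nat -> nat -> bool) : Prop :=
  (forall a, a \in X -> ~~ r a a) /\
  (forall a b c, a \in X -> b \in X -> c \in X -> r a b -> r b c -> r a c) /\
  (forall a b, a \in X -> b \in X -> a <> b -> r a b \/ r b a).

Record profile := Profile {
  voters : {fset nat};
  cands : {fset nat};
  ballot : nat -> nat -> nat -> bool;
  voters_ne : voters != fset0;
  cands_ne : cands != fset0;
  ballot_lin : forall v, v \in voters -> strict_linear_on cands (ballot v)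
}.

(* P|_{x,y} = P'|_{x,y}: both restrictions are defined (x,y candidates of
   both), same voter set, and every voter's ballot restricted to {x,y}
   coincides. *)
Definition same_restr2 (P P' : profile) (x y : nat) : Prop :=
  voters P = voters P' /\
  x \in cands P /\ y \in cands P /\ x \in cands P' /\ y \in cands P' /\
  (forall v, v \in voters P -> forall a b, a \in [:: x; y] -> b \in [:: x; y] ->
     ballot P v a b = ballot P' v a b).

Definition isVCCR (f : profile -> nat -> nat -> Prop) : Prop :=
  forall P, (forall x y, f P x y -> x \in cands P /\ y \in cands P) /\
            (forall x y, f P x y -> ~ f P y x).

Definition isVSCC (F : profile -> nat -> Prop) : Prop :=
  forall P, (exists x, F P x) /\ (forall x, F P x -> x \in cands P).

Definition defeat_rationalized (F : profile -> nat -> Prop)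
    (f : profile -> nat -> nat -> Prop) : Prop :=
  forall P x, F P x <-> (x \in cands P /\ ~ exists y, y \in cands P /\ f P y x).

Definition IIA (f : profile -> nat -> nat -> Prop) : Prop :=
  forall P P' x y, f P x y -> same_restr2 P P' x y -> f P' x y.

Definition pure_IIA (F : profile -> nat -> Prop) : Prop :=
  forall P y, y \in cands P -> ~ F P y ->
    exists x, x \in cands P /\ forall P', same_restr2 P P' x y -> ~ F P' y.

(* Main.v *)
Require Import Defs.
From mathcomp Require Import all_boot finmap.
From Stdlib Require Import Classical.
Set Implicit Arguments. Unset Strict Implicit.
Local Open Scope fset_scope.

Lemma pair_ne (x y : nat) : [fset x; y] != fset0.
Proof. apply/eqP => H. have : x \in [fset x; y] by rewrite !inE eqxx. by rewrite H inE. Qed.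

Lemma restr_lin (P : profile) (x y : nat) (hx : x \in cands P) (hy : y \in cands P) :
  forall v, v \in voters P -> strict_linear_on [fset x; y] (ballot P v).
Proof.
move=> v hv; have [h1 [h2 h3]] := ballot_lin hv.
have sub : forall a, a \in [fset x; y] -> a \in cands P.
  by move=> a; rewrite !inE => /orP [] /eqP ->.
split; first by move=> a /sub; apply: h1.
split; first by move=> a b c /sub ha /sub hb /sub hc; apply: h2.
by move=> a b /sub ha /sub hb; apply: h3.
Qed.

Definition restr (P : profile) (x y : nat) (hx : x \in cands P) (hy : y \in cands P) : profile :=
  @Profile (voters P) [fset x; y] (ballot P) (voters_ne P) (pair_ne x y) (restr_lin hx hy).

Lemma restr_same (P : profile) x y (hx : x \in cands P) (hy : y \in cands P) :
  same_restr2 P (restr hx hy) x y /\ same_restr2 P (restr hx hy) y x.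
Proof.
rewrite /same_restr2 /=.
have hx' : x \in [fset x; y] by rewrite !inE eqxx.
have hy' : y \in [fset x; y] by rewrite !inE eqxx orbT.
by do !split.
Qed.

Lemma same_trans P P' P'' x y :
  same_restr2 P P' x y -> same_restr2 P' P'' x y -> same_restr2 P P'' x y.
Proof.
move=> [e1 [a1 [b1 [c1 [d1 g1]]]]] [e2 [a2 [b2 [c2 [d2 g2]]]]].
do !split => //; first by rewrite e1.
move=> v hv a b ha hb; rewrite g1 // g2 //; by rewrite -e1.
Qed.

Lemma same_refl P x y : x \in cands P -> y \in cands P -> same_restr2 P P x y.
Proof. by move=> hx hy; do !split. Qed.

Theorem proposition5p4 (F : profile -> nat -> Prop) (HF : isVSCC F) :
  pure_IIA F <->
  exists f : profile -> nat -> nat -> Prop, isVCCR f /\ IIA f /\ defeat_rationalized F f.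
Proof.
split.
- move=> HP.
  exists (fun P x y => x \in cands P /\ y \in cands P /\
            forall P', same_restr2 P P' x y -> ~ F P' y).
  split; [|split].
  + move=> P; split; first by move=> x y [? [? _]].
    move=> x y [hx [hy H1]] [_ [_ H2]].
    have [s1 s2] := restr_same hx hy.
    have [[z Hz] Hin] := HF (restr hx hy).
    have := Hin _ Hz; rewrite /= !inE => /orP [] /eqP Ez; subst z.
    * exact: (H2 _ s2 Hz).
    * exact: (H1 _ s1 Hz).
  + move=> P P' x y [hx [hy H]] hs.
    have [_ [_ [_ [hx' [hy' _]]]]] := hs.
    split; [done|split; first done].
    move=> P'' hs'; apply: H; exact: same_trans hs hs'.
  + move=> P x; split.
    * move=> Fx; have hx := (HF P).2 _ Fx; split => //.
      move=> [y [hy [_ [_ H]]]]; exact: (H P (same_refl hy hx) Fx).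
    * move=> [hx Hn]; apply: NNPP => nF.
      have [y [hy H]] := HP P x hx nF.
      apply: Hn; exists y; split => //; split => //; split => //.
- move=> [f [Hf [Hi Hd]]] P y hy nF.
  have : ~ (y \in cands P /\ ~ (exists z, z \in cands P /\ f P z y)).
    by move=> /(Hd P y).
  move=> H; have [x [hx fx]] : exists x, x \in cands P /\ f P x y.
    apply: NNPP => Hn; apply: H; split => //.
  exists x; split => // P' hs FP'.
  have [_ [_ [_ [hx' _]]]] := hs.
  have := (Hd P' y).1 FP'; move=> [_]; apply; exists x; split => //.
  exact: Hi hs.
Qed.
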